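(* Let $\lambda_1\ge\lambda_2\ge\lambda_3>\lambda_4=0$ with $\lambda_1+\lambda_2+\lambda_3=1$, and let $$\rho_{\vec\lambda}=\lambda_1\Phi_1+\lambda_2|01\rangle\langle01|+\lambda_3\Phi_2,\qquad \sigma_{\vec\lambda}=\lambda_1\Phi_1+\lambda_2\Phi_2+\lambda_3\Phi_3.$$ If $2\lambda_1-\lambda_2>1$ and $\lambda_2>\lambda_3$, then there exists no non-entangling map $\Lambda:\mathcal{D}\to\mathcal{D}$ such that $\Lambda(\rho_{\vec\lambda})=\sigma_{\vec\lambda}$.
   Context: $\mathcal{D}$ is the set of two-qubit density matrices on $\mathbb{C}^2\otimes\mathbb{C}^2$ (Hermitian, positive semidefinite, trace one $4\times4$ matrices), written in the computational basis $\{|ij\rangle\}_{i,j\in\{0,1\}}$. The Bell vectors are $|\Phi_1\rangle=\frac{1}{\sqrt2}(|00\rangle+|11\rangle)$, $|\Phi_2\rangle=\frac{1}{\sqrt2}(|00\rangle-|11\rangle)$, $|\Phi_3\rangle=\frac{1}{\sqrt2}(|10\rangle+|01\rangle)$, $|\Phi_4\rangle=\frac{1}{\sqrt2}(|10\rangle-|01\rangle)$, and $\Phi_i=|\Phi_i\rangle\langle\Phi_i|$. A state is separable if it is a convex combination of product states $|\phi\rangle\langle\phi|\otimes|\chi\rangle\langle\chi|$. A map $\Lambda:\mathcal{D}\to\mathcal{D}$ is non-entangling (NE) if it is completely positive and trace preserving and maps every separable state to a separable state. *)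

(* Defs.v *)
From HB Require Import structures.
From mathcomp Require Import all_boot all_order all_algebra.
From mathcomp Require Import reals.
From mathcomp.real_closed Require Import complex mxtens.

Set Implicit Arguments.
Unset Strict Implicit.
Unset Printing Implicit Defensive.
Import Order.TTheory GRing.Theory Num.Theory.
Local Open Scope ring_scope.
Local Open Scope complex_scope.

Section QuantumDefs.
Variable R : realType.
Local Notation C := R[i].

Definition adjmx {m n} (A : 'M[C]_(m, n)) : 'M[C]_(n, m) :=
  \matrix_(i, j) (A j i)^*.

(* Hermitian / positive semidefinite operators, for matrices indexed by an
   arbitrary finite type (needed for amplifications C^k (x) C^4). *)
Definition hermitian_fun (I : finType) (X : I -> I -> C) : Prop :=
  forall i j, X j i = (X i j)^*.

Definition psd_fun (I : finType) (X : I -> I -> C) : Prop :=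
  hermitian_fun X /\
  forall v : I -> C, 0 <= \sum_(i : I) \sum_(j : I) (v i)^* * X i j * v j.

Definition psd {n} (A : 'M[C]_n) : Prop := psd_fun (fun i j => A i j).

(* Two-qubit density matrices: Hermitian, PSD, trace one 4x4 matrices,
   in the computational basis |ij> indexed by 2 i + j (mxtens_index). *)
Definition density (A : 'M[C]_4) : Prop :=
  (forall i j, A j i = (A i j)^*) /\ psd A /\ \tr A = 1.

Definition ketbra {n} (v : 'cV[C]_n) : 'M[C]_n := v *m adjmx v.

Definition unit_vec {n} (v : 'cV[C]_n) : Prop := (adjmx v *m v) 0 0 = 1.

Definition product_state (A : 'M[C]_4) : Prop :=
  exists (phi chi : 'cV[C]_2), unit_vec phi /\ unit_vec chi /\
    A = ketbra phi *t ketbra chi.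

Definition separable (A : 'M[C]_4) : Prop :=
  exists (n : nat) (p : 'I_n -> R) (P : 'I_n -> 'M[C]_4),
    (forall k, 0 <= p k) /\ \sum_(k < n) p k = 1 /\
    (forall k, product_state (P k)) /\
    A = \sum_(k < n) (p k)%:C *: P k.

Definition linear_map (L : 'M[C]_4 -> 'M[C]_4) : Prop :=
  forall (a : C) (A B : 'M[C]_4), L (a *: A + B) = a *: L A + L B.

Definition trace_preserving (L : 'M[C]_4 -> 'M[C]_4) : Prop :=
  forall A, \tr (L A) = \tr A.

(* (id_k (x) L) applied to an operator X on C^k (x) C^4, block-wise. *)
Definition ampliate (k : nat) (L : 'M[C]_4 -> 'M[C]_4)
    (X : 'I_k * 'I_4 -> 'I_k * 'I_4 -> C) : 'I_k * 'I_4 -> 'I_k * 'I_4 -> C :=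
  fun ai bj => L (\matrix_(i, j) X (ai.1, i) (bj.1, j)) ai.2 bj.2.

Definition completely_positive (L : 'M[C]_4 -> 'M[C]_4) : Prop :=
  forall (k : nat) (X : 'I_k * 'I_4 -> 'I_k * 'I_4 -> C),
    psd_fun X -> psd_fun (ampliate L X).

Definition CPTP (L : 'M[C]_4 -> 'M[C]_4) : Prop :=
  linear_map L /\ completely_positive L /\ trace_preserving L.

Definition non_entangling (L : 'M[C]_4 -> 'M[C]_4) : Prop :=
  CPTP L /\ forall A, separable A -> separable (L A).

Definition ket (k : 'I_4) : 'cV[C]_4 := delta_mx k 0.
Definition ket00 : 'cV[C]_4 := ket (@Ordinal 4 0 isT).
Definition ket01 : 'cV[C]_4 := ket (@Ordinal 4 1 isT).
Definition ket10 : 'cV[C]_4 := ket (@Ordinal 4 2 isT).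
Definition ket11 : 'cV[C]_4 := ket (@Ordinal 4 3 isT).

(* Bell projectors Phi_i = |Phi_i><Phi_i|, with |Phi_i> = (..)/sqrt 2,
   so Phi_i = (1/2) |u><u| for the unnormalised u. *)
Definition Bell1 : 'M[C]_4 := (2%:R)^-1 *: ketbra (ket00 + ket11).
Definition Bell2 : 'M[C]_4 := (2%:R)^-1 *: ketbra (ket00 - ket11).
Definition Bell3 : 'M[C]_4 := (2%:R)^-1 *: ketbra (ket10 + ket01).
Definition Bell4 : 'M[C]_4 := (2%:R)^-1 *: ketbra (ket10 - ket01).

Definition rho_l (l1 l2 l3 : R) : 'M[C]_4 :=
  l1%:C *: Bell1 + l2%:C *: ketbra ket01 + l3%:C *: Bell2.

Definition sigma_l (l1 l2 l3 : R) : 'M[C]_4 :=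
  l1%:C *: Bell1 + l2%:C *: Bell2 + l3%:C *: Bell3.

End QuantumDefs.

(* Submission.v *)
Require Import Defs.
From HB Require Import structures.
From mathcomp Require Import all_boot all_order all_algebra.
From mathcomp Require Import reals.
From mathcomp.real_closed Require Import complex mxtens.
From mathcomp Require Import ring lra.
Import Order.TTheory GRing.Theory Num.Theory.
Local Open Scope ring_scope.

Set Implicit Arguments.
Unset Strict Implicit.
Unset Printing Implicit Defensive.

Section P.
Local Open Scope complex_scope.
Variable R : realType.
Local Notation C := R[i].
Local Notation cRe := complex.Re.
Local Notation cIm := complex.Im.

Lemma cReM (x y : C) : cRe (x * y) = cRe x * cRe y - cIm x * cIm y.
Proof. by case: x => [a b]; case: y => [c d] /=; ring. Qed.
Lemma cImM (x y : C) : cIm (x * y) = cRe x * cIm y + cIm x * cRe y.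
Proof. by case: x => [a b]; case: y => [c d] /=; ring. Qed.
Lemma cReD (x y : C) : cRe (x + y) = cRe x + cRe y. Proof. by case: x; case: y. Qed.
Lemma cImD (x y : C) : cIm (x + y) = cIm x + cIm y. Proof. by case: x; case: y. Qed.
Lemma cReN (x : C) : cRe (- x) = - cRe x. Proof. by case: x. Qed.
Lemma cImN (x : C) : cIm (- x) = - cIm x. Proof. by case: x. Qed.
Lemma cReJ (x : C) : cRe ((conjc x)) = cRe x. Proof. by case: x. Qed.
Lemma cImJ (x : C) : cIm ((conjc x)) = - cIm x. Proof. by case: x. Qed.
Lemma cReR (r : R) : cRe (r%:C) = r. Proof. by []. Qed.
Lemma cImR (r : R) : cIm (r%:C) = 0. Proof. by []. Qed.
Lemma cRe0 : cRe (0 : C) = 0. Proof. by []. Qed.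
Lemma cIm0 : cIm (0 : C) = 0. Proof. by []. Qed.
Lemma cRe1 : cRe (1 : C) = 1. Proof. by []. Qed.
Lemma cIm1 : cIm (1 : C) = 0. Proof. by []. Qed.
Lemma cRei : cRe ('i : C) = 0. Proof. by []. Qed.
Lemma cImi : cIm ('i : C) = 1. Proof. by []. Qed.

Definition cE := (cReM, cImM, cReD, cImD, cReN, cImN, cReJ, cImJ, cReR, cImR, cRe0, cIm0, cRe1, cIm1, cRei, cImi).

Lemma cplxP (x y : C) : cRe x = cRe y -> cIm x = cIm y -> x = y.
Proof. by case: x => a b; case: y => c d /= -> ->. Qed.

Lemma inv2C : (2%:R : C)^-1 = (2^-1 : R)%:C.
Proof. by rewrite fmorphV rmorph_nat. Qed.

Definition col2 (x y : C) : 'cV[C]_2 := \matrix_(i, j) (if (i : nat) == 0%N then x else y).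
Definition v4 (a b c d : C) : 'cV[C]_4 := \matrix_(i, j) (nth 0 [:: a; b; c; d] i).

Lemma col2_eta (p : 'cV[C]_2) : p = col2 (p 0 0) (p 1 0).
Proof.
apply/matrixP => i j; rewrite mxE; rewrite [j]ord1.
by case: i => [[|[|?]] Hi] //=; congr (p _ _); apply: val_inj.
Qed.

Lemma tens_col2 (x y z w : C) :
  col2 x y *t col2 z w = v4 (x * z) (x * w) (y * z) (y * w).
Proof.
apply/matrixP => i j; rewrite !mxE.
case: i => [[|[|[|[|?]]]] Hi] //=.
Qed.

Lemma ketbraE n (w : 'cV[C]_n) i j : ketbra w i j = w i 0 * (conjc (w j 0)).
Proof. by rewrite /ketbra mxE big_ord1 mxE. Qed.

Lemma adjmx_tens (m n p q : nat) (A : 'M[C]_(m, n)) (B : 'M[C]_(p, q)) :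
  adjmx (A *t B) = adjmx A *t adjmx B.
Proof.
apply/matrixP => i j.
case: (mxtens_indexP i) => [ia ib]; case: (mxtens_indexP j) => [ja jb].
by rewrite tensmxE !mxE !mxtens_indexK rmorphM.
Qed.

Lemma ketbra_tens (p q : 'cV[C]_2) : ketbra p *t ketbra q = ketbra (p *t q).
Proof. by rewrite /ketbra -tensmx_mul -adjmx_tens. Qed.

Definition qf (u : 'cV[C]_4) (M : 'M[C]_4) : C :=
  \sum_i \sum_j (conjc (u i 0)) * M i j * u j 0.

Definition ip (u w : 'cV[C]_4) : C := \sum_i (conjc (u i 0)) * w i 0.

Lemma qfD u A B : qf u (A + B) = qf u A + qf u B.
Proof.
rewrite /qf -big_split; apply: eq_bigr => i _; rewrite -big_split.
by apply: eq_bigr => j _; rewrite mxE mulrDr mulrDl.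
Qed.

Lemma qf0 u : qf u 0 = 0.
Proof. by rewrite /qf big1 // => i _; rewrite big1 // => j _; rewrite mxE mulr0 mul0r. Qed.

Lemma qfZ u a A : qf u (a *: A) = a * qf u A.
Proof.
rewrite /qf mulr_sumr; apply: eq_bigr => i _; rewrite mulr_sumr.
by apply: eq_bigr => j _; rewrite mxE; ring.
Qed.

Lemma qf_sum n u (X : 'I_n -> 'M[C]_4) : qf u (\sum_k X k) = \sum_k qf u (X k).
Proof. exact: (big_morph (qf u) (qfD u) (qf0 u)). Qed.

Lemma conjcD (x y : C) : (conjc (x + y)) = (conjc x) + (conjc y).
Proof. by case: x => a b; case: y => c d /=; rewrite opprD. Qed.
Lemma conjcM (x y : C) : (conjc (x * y)) = (conjc x) * (conjc y).
Proof. by case: x => a b; case: y => c d; apply/eqP; rewrite eq_complex /=; apply/andP; split; apply/eqP; ring. Qed.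
Lemma conjc_sum n (F : 'I_n -> C) : (conjc (\sum_i F i)) = \sum_i (conjc (F i)).
Proof. by elim/big_rec2: _ => [|i x y _ <-]; rewrite ?conjc0 ?conjcD. Qed.

Lemma ipJ u w : (conjc (ip u w)) = \sum_i (conjc (w i 0)) * u i 0.
Proof. by rewrite /ip conjc_sum; apply: eq_bigr => i _; rewrite conjcM conjcK mulrC. Qed.

Lemma qf_ketbra u w : qf u (ketbra w) = ip u w * (conjc (ip u w)).
Proof.
rewrite ipJ /qf /ip mulr_suml; apply: eq_bigr => i _.
rewrite mulr_sumr; apply: eq_bigr => j _.
by rewrite ketbraE; ring.
Qed.

Lemma ip_v4 a b c d e f g h : ip (v4 a b c d) (v4 e f g h) = (conjc a) * e + (conjc b) * f + (conjc c) * g + (conjc d) * h.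
Proof. by rewrite /ip !big_ord_recr big_ord0 /= !mxE /= add0r. Qed.

Lemma qf_psd u M : psd M -> 0 <= cRe (qf u M).
Proof.
case=> _ /(_ (fun i => u i 0)) H.
have E : qf u M = \sum_i \sum_j Num.conj (u i 0) * M i j * u j 0 by [].
by move: H; rewrite -E lecE => /andP [_].
Qed.

Lemma CS (a b c d : C) :
  cRe (a * c + b * d) ^+ 2 + cIm (a * c + b * d) ^+ 2 <=
  (cRe a ^+ 2 + cIm a ^+ 2 + cRe b ^+ 2 + cIm b ^+ 2) *
  (cRe c ^+ 2 + cIm c ^+ 2 + cRe d ^+ 2 + cIm d ^+ 2).
Proof.
rewrite !cE.
case: a => a1 a2; case: b => b1 b2; case: c => c1 c2; case: d => d1 d2 /=.
set X := a1 * d1 + a2 * d2 - (b1 * c1 + b2 * c2).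
set Y := a2 * d1 - a1 * d2 - (b2 * c1 - b1 * c2).
rewrite -subr_ge0.
have -> : (a1 ^+ 2 + a2 ^+ 2 + b1 ^+ 2 + b2 ^+ 2) * (c1 ^+ 2 + c2 ^+ 2 + d1 ^+ 2 + d2 ^+ 2) -
  ((a1 * c1 - a2 * c2 + (b1 * d1 - b2 * d2)) ^+ 2 + (a1 * c2 + a2 * c1 + (b1 * d2 + b2 * d1)) ^+ 2)
  = X ^+ 2 + Y ^+ 2 by rewrite /X /Y; ring.
by rewrite addr_ge0 // sqr_ge0.
Qed.

Lemma cj0 : conjc (0 : C) = 0. Proof. by apply: cplxP; rewrite !cE ?oppr0. Qed.
Lemma cj1 : conjc (1 : C) = 1. Proof. by apply: cplxP; rewrite !cE ?oppr0. Qed.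
Lemma cjN1 : conjc (-1 : C) = -1. Proof. by apply: cplxP; rewrite !cE ?oppr0. Qed.
Lemma cjR (r : R) : conjc (r%:C) = r%:C. Proof. by apply: cplxP; rewrite !cE ?oppr0. Qed.

Lemma cReJJ (z : C) : cRe (z * conjc z) = cRe z ^+ 2 + cIm z ^+ 2.
Proof. rewrite !cE; ring. Qed.

Lemma cReRM (r : R) (z : C) : cRe (r%:C * z) = r * cRe z.
Proof. by rewrite !cE mul0r subr0. Qed.

Lemma unit2 (p : 'cV[C]_2) : unit_vec p ->
  cRe (p 0 0) ^+ 2 + cIm (p 0 0) ^+ 2 + cRe (p 1 0) ^+ 2 + cIm (p 1 0) ^+ 2 = 1.
Proof.
rewrite /unit_vec mxE !big_ord_recr big_ord0 /= add0r !mxE => /(congr1 (@complex.Re _)).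
rewrite !cE /= => <-.
have -> : (widen_ord (leqnSn 1) ord_max) = 0 :> 'I_2 by apply: val_inj.
have -> : (@ord_max 1) = 1 :> 'I_2 by apply: val_inj.
ring.
Qed.

Definition bv1 : 'cV[C]_4 := v4 1 0 0 1.
Definition bv2 : 'cV[C]_4 := v4 1 0 0 (-1).
Definition bv3 : 'cV[C]_4 := v4 0 1 1 0.
Definition bv4 : 'cV[C]_4 := v4 0 (-1) 1 0.

Lemma prod_expand (p q : 'cV[C]_2) : ketbra p *t ketbra q =
  ketbra (v4 (p 0 0 * q 0 0) (p 0 0 * q 1 0) (p 1 0 * q 0 0) (p 1 0 * q 1 0)).
Proof. by rewrite ketbra_tens {1}(col2_eta p) {1}(col2_eta q) tens_col2. Qed.

Lemma prod_bound1 (p q : 'cV[C]_2) : unit_vec p -> unit_vec q ->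
  cRe (qf bv1 (ketbra p *t ketbra q)) <= 1.
Proof.
move=> /unit2 Hp /unit2 Hq.
rewrite prod_expand qf_ketbra ip_v4 cReJJ cj0 cj1 !mul0r !mul1r !addr0.
have := CS (p 0 0) (p 1 0) (q 0 0) (q 1 0).
by rewrite Hp Hq mulr1.
Qed.

Lemma prod_bound2 (p q : 'cV[C]_2) : unit_vec p -> unit_vec q ->
  cRe (qf bv2 (ketbra p *t ketbra q)) <= 1.
Proof.
move=> /unit2 Hp /unit2 Hq.
rewrite prod_expand qf_ketbra ip_v4 cReJJ cj0 cj1 cjN1 !mul0r !mul1r !addr0.
have := CS (p 0 0) (p 1 0) (q 0 0) (- q 1 0).
rewrite Hp !cImN !cReN !sqrrN Hq mulr1.
by rewrite mulrN mulN1r.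
Qed.

Lemma prod_bound3 (p q : 'cV[C]_2) : unit_vec p -> unit_vec q ->
  cRe (qf bv3 (ketbra p *t ketbra q)) <= 1.
Proof.
move=> /unit2 Hp /unit2 Hq.
rewrite prod_expand qf_ketbra ip_v4 cReJJ cj0 cj1 !mul0r !mul1r !addr0 add0r.
have := CS (p 0 0) (p 1 0) (q 1 0) (q 0 0).
have -> : cRe (q 1 0) ^+ 2 + cIm (q 1 0) ^+ 2 + cRe (q 0 0) ^+ 2 + cIm (q 0 0) ^+ 2 = 1.
  by rewrite -Hq; ring.
by rewrite Hp mulr1.
Qed.

Lemma sep_bound u M : (forall p q : 'cV[C]_2, unit_vec p -> unit_vec q ->
     cRe (qf u (ketbra p *t ketbra q)) <= 1) -> separable M -> cRe (qf u M) <= 1.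
Proof.
move=> Hb [n [p [P [p0 [p1 [PP ->]]]]]].
rewrite qf_sum (big_morph _ cReD cRe0) -p1; apply: ler_sum => k _.
rewrite qfZ cReRM.
have [a [b [Ha [Hb' ->]]]] := PP k.
by rewrite -[X in _ <= X]mulr1 ler_wpM2l // Hb.
Qed.

Lemma psdE (M : 'M[C]_4) : psd M <->
  (forall i j, M j i = conjc (M i j)) /\
  (forall v : 'I_4 -> C, 0 <= \sum_i \sum_j conjc (v i) * M i j * v j).
Proof. by []. Qed.

Lemma psd_ketbra (w : 'cV[C]_4) : psd (ketbra w).
Proof.
apply/psdE; split=> [i j|v]; first by rewrite !ketbraE conjcM conjcK mulrC.
set z := \sum_i conjc (v i) * w i 0.
have -> : \sum_i \sum_j conjc (v i) * ketbra w i j * v j = z * conjc z.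
  rewrite /z conjc_sum mulr_suml; apply: eq_bigr => i _.
  rewrite mulr_sumr; apply: eq_bigr => j _.
  by rewrite ketbraE conjcM conjcK; ring.
exact: mulcJ_ge0.
Qed.

Lemma psd_scale (r : R) (M : 'M[C]_4) : 0 <= r -> psd M -> psd (r%:C *: M).
Proof.
move=> r0 /psdE [Hh Hp]; apply/psdE; split=> [i j|v].
  by rewrite !mxE Hh conjcM cjR.
have -> : \sum_i \sum_j conjc (v i) * (r%:C *: M) i j * v j =
          r%:C * \sum_i \sum_j conjc (v i) * M i j * v j.
  rewrite mulr_sumr; apply: eq_bigr => i _; rewrite mulr_sumr; apply: eq_bigr => j _.
  by rewrite mxE; ring.
by apply: mulr_ge0 => //; rewrite ler0c.
Qed.

Lemma sum_pair1 (G : 'I_1 * 'I_4 -> C) : \sum_a G a = \sum_i G (ord0, i).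
Proof.
rewrite (eq_bigr (fun p => G (p.1, p.2))); last by case.
by rewrite -(pair_bigA _ (fun x i => G (x, i))) /= big_ord1.
Qed.

Lemma cp_psd (L : 'M[C]_4 -> 'M[C]_4) : completely_positive L ->
  forall X, psd X -> psd (L X).
Proof.
move=> HL X /psdE [Hh Hp].
have := HL 1%N (fun a b => X a.2 b.2).
have EX : \matrix_(i, j) X i j = X by apply/matrixP => i j; rewrite mxE.
case.
  split=> [a b|v]; first by rewrite Hh.
  rewrite sum_pair1; under eq_bigr do rewrite sum_pair1.
  exact: (Hp (fun i => v (ord0, i))).
move=> Hh' Hp'; apply/psdE; split=> [i j|w].
  by have := Hh' (ord0, i) (ord0, j); rewrite /ampliate /= EX.
have := Hp' (fun a => w a.2).
rewrite sum_pair1; under eq_bigr do rewrite sum_pair1.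
by rewrite /ampliate /= EX.
Qed.

End P.

Section P.
Local Open Scope complex_scope.
Variable R : realType.
Local Notation C := R[i].
Local Notation cRe := complex.Re.
Local Notation cIm := complex.Im.
Lemma addmE (A B : 'M[C]_4) i j : (A + B) i j = A i j + B i j.
Proof. by rewrite mxE. Qed.
Lemma scalemE (a : C) (A : 'M[C]_4) i j : (a *: A) i j = a * A i j.
Proof. by rewrite mxE. Qed.

Lemma ReC2 (a b : R) : cRe (a +i* b) = a. Proof. by []. Qed.
Lemma ImC2 (a b : R) : cIm (a +i* b) = b. Proof. by []. Qed.

Definition TWM (a0 a1 b0 b1 : R) : 'M[C]_4 :=
  ketbra (v4 (a0 * b0)%:C 0 0 (a1 * b1)%:C) + ketbra (v4 0 (a0 * b1)%:C 0 0)
  + ketbra (v4 0 0 (a1 * b0)%:C 0).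

Definition wph (k : nat) : C := nth 0 [:: 1; 'i; -1; -'i] k.

Definition TV (a0 a1 b0 b1 : R) (w : C) : 'cV[C]_4 :=
  v4 (a0*b0)%:C ((a0*b1)%:C * conjc w) ((a1*b0)%:C * w) ((a1*b1)%:C * (w * conjc w)).

Definition iC : C := 'i.
Lemma ii : iC * iC = -1.
Proof. by rewrite /iC -expr2 sqr_i. Qed.
Lemma cj_i : conjc iC = - iC.
Proof. by rewrite /iC; apply: cplxP; [rewrite cReN cReJ cRei oppr0 | rewrite cImN cImJ cImi]. Qed.
Lemma cjN (x : C) : conjc (- x) = - conjc x.
Proof. by case: x => a b; apply: cplxP. Qed.

Lemma TWE (a0 a1 b0 b1 : R) : (4%:R : C) *: TWM a0 a1 b0 b1 =
  ketbra (TV a0 a1 b0 b1 1) + ketbra (TV a0 a1 b0 b1 iC)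
  + ketbra (TV a0 a1 b0 b1 (-1)) + ketbra (TV a0 a1 b0 b1 (-iC)).
Proof.
apply/matrixP => i j.
rewrite /TWM /TV !scalemE !addmE !ketbraE !mxE.
case: i => [[|[|[|[|?]]]] Hi] //; case: j => [[|[|[|[|?]]]] Hj] //; cbn [nth nat_of_ord].
all: rewrite ?(conjcM, conjcK, cjN, cj_i, cj1, cj0, cjR).
all: ring: ii.
Qed.

Lemma unit_col2 (x y : C) : cRe x ^+ 2 + cIm x ^+ 2 + cRe y ^+ 2 + cIm y ^+ 2 = 1 ->
  unit_vec (col2 x y).
Proof.
move=> H; rewrite /unit_vec mxE !big_ord_recr big_ord0 /= add0r !mxE /=.
apply: cplxP; rewrite !cE /=; [rewrite -H|]; ring.
Qed.

Definition wk (k : nat) : C := nth 0 [:: 1; iC; -1; -iC] k.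

Lemma col2E0 (x y : C) : col2 x y 0 0 = x. Proof. by rewrite mxE. Qed.
Lemma col2E1 (x y : C) : col2 x y 1 0 = y. Proof. by rewrite mxE. Qed.

Lemma prod_TV (a0 a1 b0 b1 : R) (w : C) :
  ketbra (col2 a0%:C (a1%:C * w)) *t ketbra (col2 b0%:C (b1%:C * conjc w)) =
  ketbra (TV a0 a1 b0 b1 w).
Proof.
rewrite prod_expand !col2E0 !col2E1 /TV !rmorphM.
congr (ketbra (v4 _ _ _ _)); ring.
Qed.

Lemma unit_w (x y : R) (w : C) : x ^+ 2 + y ^+ 2 = 1 -> w * conjc w = 1 ->
  unit_vec (col2 x%:C (y%:C * w)).
Proof.
move=> H Hw; apply: unit_col2.
have Hw' : cRe w ^+ 2 + cIm w ^+ 2 = 1.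
  by rewrite -cReJJ Hw.
rewrite !cE; transitivity (x ^+ 2 + y ^+ 2 * (cRe w ^+ 2 + cIm w ^+ 2)); first ring.
by rewrite Hw' mulr1.
Qed.

Lemma wk_unit (k : 'I_4) : wk k * conjc (wk k) = 1.
Proof.
rewrite /wk; case: k => [[|[|[|[|?]]]] Hk] //; cbn [nth nat_of_ord]; rewrite ?(cjN, cj_i, cj1); ring: ii.
Qed.

Lemma TW_sep (a0 a1 b0 b1 : R) : a0 ^+ 2 + a1 ^+ 2 = 1 -> b0 ^+ 2 + b1 ^+ 2 = 1 ->
  separable (TWM a0 a1 b0 b1).
Proof.
move=> Ha Hb.
exists 4%N, (fun _ => 4^-1), (fun k => ketbra (col2 a0%:C (a1%:C * wk k)) *t
                                       ketbra (col2 b0%:C (b1%:C * conjc (wk k)))).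
split; first by move=> k; rewrite invr_ge0.
split; first by rewrite sumr_const card_ord -mulr_natr; field.
split.
  move=> k; exists (col2 a0%:C (a1%:C * wk k)), (col2 b0%:C (b1%:C * conjc (wk k))).
  split; first exact: unit_w (wk_unit k).
  split => //; apply: unit_w => //; by rewrite conjcK mulrC wk_unit.
under eq_bigr do rewrite prod_TV.
rewrite -scaler_sumr.
have -> : TWM a0 a1 b0 b1 = (4^-1 : R)%:C *: ((4%:R : C) *: TWM a0 a1 b0 b1).
  by rewrite scalerA -(rmorph_nat (real_complex R)) -rmorphM mulVf ?scale1r // pnatr_eq0.
congr (_ *: _); rewrite TWE.
rewrite !big_ord_recr big_ord0 /= add0r.
done.
Qed.
End P.

Section P.
Local Open Scope complex_scope.
Variable R : realType.
Local Notation C := R[i].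
Local Notation cRe := complex.Re.
Local Notation cIm := complex.Im.
Local Notation bv1 := (bv1 R).
Local Notation bv2 := (bv2 R).
Local Notation bv3 := (bv3 R).
Local Notation bv4 := (bv4 R).

Lemma ket00E : ket00 R = v4 1 0 0 0.
Proof. by apply/matrixP => i j; rewrite !mxE [j]ord1; case: i => [[|[|[|[|?]]]] Hi]. Qed.
Lemma ket01E : ket01 R = v4 0 1 0 0.
Proof. by apply/matrixP => i j; rewrite !mxE [j]ord1; case: i => [[|[|[|[|?]]]] Hi]. Qed.
Lemma ket10E : ket10 R = v4 0 0 1 0.
Proof. by apply/matrixP => i j; rewrite !mxE [j]ord1; case: i => [[|[|[|[|?]]]] Hi]. Qed.
Lemma ket11E : ket11 R = v4 0 0 0 1.
Proof. by apply/matrixP => i j; rewrite !mxE [j]ord1; case: i => [[|[|[|[|?]]]] Hi]. Qed.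

Lemma v4D (a b c d e f g h : C) : v4 a b c d + v4 e f g h = v4 (a + e) (b + f) (c + g) (d + h).
Proof. by apply/matrixP => i j; rewrite !mxE; case: i => [[|[|[|[|?]]]] Hi]. Qed.
Lemma v4B (a b c d e f g h : C) : v4 a b c d - v4 e f g h = v4 (a - e) (b - f) (c - g) (d - h).
Proof. by apply/matrixP => i j; rewrite !mxE; case: i => [[|[|[|[|?]]]] Hi]. Qed.

Lemma Bell1E : Bell1 R = (2^-1 : R)%:C *: ketbra (v4 1 0 0 1).
Proof. by rewrite /Bell1 inv2C ket00E ket11E v4D !addr0 !add0r. Qed.
Lemma Bell2E : Bell2 R = (2^-1 : R)%:C *: ketbra (v4 1 0 0 (-1)).
Proof. by rewrite /Bell2 inv2C ket00E ket11E v4B !subr0 !sub0r. Qed.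
Lemma Bell3E : Bell3 R = (2^-1 : R)%:C *: ketbra (v4 0 1 1 0).
Proof. by rewrite /Bell3 inv2C ket10E ket01E v4D !addr0 !add0r. Qed.

Lemma qfv (u w : 'cV[C]_4) : cRe (qf u (ketbra w)) = cRe (ip u w) ^+ 2 + cIm (ip u w) ^+ 2.
Proof. by rewrite qf_ketbra cReJJ. Qed.

Ltac qval := rewrite /Submission.bv1 /Submission.bv2 /Submission.bv3 /Submission.bv4 qfv ip_v4 ?(cj0, cj1, cjN1);
  rewrite ?(mul0r, mulr0, mul1r, mulr1, addr0, add0r, mulN1r, mulrN1, opprK);
  rewrite ?(cReD, cImD, cReN, cImN, cRe0, cIm0, cRe1, cIm1); try ring.

Lemma val_11 : cRe (qf bv1 (ketbra (v4 1 0 0 1))) = 4. Proof. qval. Qed.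
Lemma val_21 : cRe (qf bv2 (ketbra (v4 1 0 0 1))) = 0. Proof. qval. Qed.
Lemma val_31 : cRe (qf bv3 (ketbra (v4 1 0 0 1))) = 0. Proof. qval. Qed.
Lemma val_41 : cRe (qf bv4 (ketbra (v4 1 0 0 1))) = 0. Proof. qval. Qed.
Lemma val_12 : cRe (qf bv1 (ketbra (v4 1 0 0 (-1)))) = 0. Proof. qval. Qed.
Lemma val_22 : cRe (qf bv2 (ketbra (v4 1 0 0 (-1)))) = 4. Proof. qval. Qed.
Lemma val_32 : cRe (qf bv3 (ketbra (v4 1 0 0 (-1)))) = 0. Proof. qval. Qed.
Lemma val_42 : cRe (qf bv4 (ketbra (v4 1 0 0 (-1)))) = 0. Proof. qval. Qed.
Lemma val_13 : cRe (qf bv1 (ketbra (v4 0 1 1 0))) = 0. Proof. qval. Qed.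
Lemma val_23 : cRe (qf bv2 (ketbra (v4 0 1 1 0))) = 0. Proof. qval. Qed.
Lemma val_33 : cRe (qf bv3 (ketbra (v4 0 1 1 0))) = 4. Proof. qval. Qed.
Lemma val_43 : cRe (qf bv4 (ketbra (v4 0 1 1 0))) = 0. Proof. qval. Qed.
Lemma val_1e : cRe (qf bv1 (ketbra (v4 0 1 0 0))) = 0. Proof. qval. Qed.
Lemma val_2e : cRe (qf bv2 (ketbra (v4 0 1 0 0))) = 0. Proof. qval. Qed.
Lemma val_3e : cRe (qf bv3 (ketbra (v4 0 1 0 0))) = 1. Proof. qval. Qed.
Lemma val_4e : cRe (qf bv4 (ketbra (v4 0 1 0 0))) = 1. Proof. qval. Qed.

Definition o0 : 'I_4 := Ordinal (isT : (0 < 4)%N).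
Definition o1 : 'I_4 := Ordinal (isT : (1 < 4)%N).
Definition o2 : 'I_4 := Ordinal (isT : (2 < 4)%N).
Definition o3 : 'I_4 := Ordinal (isT : (3 < 4)%N).

Lemma sum4 (F : 'I_4 -> C) : \sum_i F i = F o0 + F o1 + F o2 + F o3.
Proof.
rewrite !big_ord_recl big_ord0 addr0 !addrA.
by congr (F _ + F _ + F _ + F _); apply: val_inj.
Qed.

Lemma v4_0 (a b c d : C) : v4 a b c d o0 0 = a. Proof. by rewrite mxE. Qed.
Lemma v4_1 (a b c d : C) : v4 a b c d o1 0 = b. Proof. by rewrite mxE. Qed.
Lemma v4_2 (a b c d : C) : v4 a b c d o2 0 = c. Proof. by rewrite mxE. Qed.
Lemma v4_3 (a b c d : C) : v4 a b c d o3 0 = d. Proof. by rewrite mxE. Qed.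

Lemma trace_qf (M : 'M[C]_4) :
  2%:R * \tr M = qf bv1 M + qf bv2 M + qf bv3 M + qf bv4 M.
Proof.
rewrite /qf /mxtrace /Submission.bv1 /Submission.bv2 /Submission.bv3 /Submission.bv4 !sum4.
rewrite !(v4_0, v4_1, v4_2, v4_3) ?(cj0, cj1, cjN1).
ring.
Qed.
End P.

Lemma core (R : realType) (l1 l2 l3 A1 A2 A3 A4 B1 B2 B4 T1 T2 T3 T4 T1' T2' c s : R) :
  0 < l3 -> l3 < l2 -> l2 <= l1 -> l1 + l2 + l3 = 1 -> 1 < 2 * l1 - l2 ->
  l1 / 2 * A1 + l2 * T1 + l3 / 2 * B1 = 2 * l1 ->
  l1 / 2 * A2 + l2 * T2 + l3 / 2 * B2 = 2 * l2 ->
  l1 / 2 * A4 + l2 * T4 + l3 / 2 * B4 = 0 ->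
  0 <= A2 -> 0 <= A3 -> 0 <= A4 -> 0 <= B4 -> 0 <= T1 -> 0 <= T4 -> 0 <= T1' -> 0 <= T2' ->
  A1 + A2 + A3 + A4 = 4 -> T1 + T2 + T3 + T4 = 2 ->
  A1 / 4 + T1 / 4 + T1' / 4 <= 1 -> A1 + B1 <= 4 -> T2 <= 1 -> T3 <= 1 ->
  (c * s) * (c * s) * B2 + (c * - c) * (c * - c) * T2 + (s * s) * (s * s) * T2' <= 1 ->
  c ^+ 2 + s ^+ 2 = 1 -> 0 < s -> l3 * s ^+ 2 < 2 * c ^+ 2 * (l2 - l3) -> False.
Proof.
move=> l3p l32 l21 hs h1 E1 E2 E4 pA2 pA3 pA4 pB4 pT1 pT4 pT1' pT2' sA sT Y S T2b T3b X cs sp key.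
have l1p : 0 < l1 by clear -l3p l32 l21; lra.
have l2p : 0 < l2 by clear -l3p l32; lra.
have i1 : l3 * B1 <= l3 * (4 - A1).
  by rewrite ler_wpM2l ?(ltW l3p) //; clear -S; lra.
have i2 : (l1 - l3) * A1 <= (l1 - l3) * (4 - T1).
  rewrite ler_wpM2l //; first by clear -l3p l32 l21; lra.
  by clear -Y pT1'; lra.
have i3 : T1 * ((l1 - l3) / 2 - l2) <= 0.
  by clear -E1 i1 i2; lra.
have cpos : 0 < (l1 - l3) / 2 - l2 by clear -hs h1; lra.
have T10 : T1 = 0.
  apply/eqP; rewrite eq_le pT1 andbT.
  by clear -i3 cpos; nra.
have i4 : (l1 - l3) * (4 - A1) <= 0.
  by rewrite T10 in E1; clear -E1 i1; lra.
have A14 : A1 = 4.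
  have d : 0 < l1 - l3 by clear -l3p l32 l21; lra.
  have : 4 - A1 <= 0 by clear -i4 d; nra.
  by rewrite T10 in Y; clear -Y pT1'; lra.
have i5 : 0 <= l1 * A4 by rewrite mulr_ge0 // ltW.
have i6 : 0 <= l2 * T4 by rewrite mulr_ge0 // ltW.
have i7 : 0 <= l3 * B4 by rewrite mulr_ge0 // ltW.
have A40 : A4 = 0.
  have : l1 * A4 = 0 by clear -E4 i5 i6 i7; lra.
  by move/eqP; rewrite mulf_eq0 gt_eqF //= => /eqP.
have T40 : T4 = 0.
  have : l2 * T4 = 0 by clear -E4 i5 i6 i7; lra.
  by move/eqP; rewrite mulf_eq0 gt_eqF //= => /eqP.
have A20 : A2 = 0 by clear -sA A14 A40 pA2 pA3; lra.
have T21 : T2 = 1 by clear -sT T10 T40 T2b T3b; lra.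
have hB : l3 * B2 = 2 * l2 by rewrite A20 T21 in E2; clear -E2; lra.
have hs2 : 0 < s ^+ 2 by rewrite exprn_gt0.
have i8 : 0 <= l3 * s ^+ 4 * T2' by rewrite !mulr_ge0 ?exprn_ge0 // ltW.
have hX : l3 * ((c * s) * (c * s) * B2 + c ^+ 4 + s ^+ 4 * T2') <= l3 * (c ^+ 2 + s ^+ 2) ^+ 2.
  rewrite cs expr1n; apply: ler_wpM2l; first exact: ltW.
  by move: X; rewrite T21; congr (_ <= _); ring.
have e0 : l3 * ((c * s) * (c * s) * B2 + c ^+ 4 + s ^+ 4 * T2') =
          2 * l2 * (c ^+ 2 * s ^+ 2) + l3 * c ^+ 4 + l3 * s ^+ 4 * T2'.
  by rewrite -hB; ring.
have e1 : l3 * (c ^+ 2 + s ^+ 2) ^+ 2 = l3 * c ^+ 4 + 2 * l3 * (c ^+ 2 * s ^+ 2) + l3 * (s ^+ 2 * s ^+ 2) by ring.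
have e2 : s ^+ 2 * (2 * c ^+ 2 * (l2 - l3)) = 2 * l2 * (c ^+ 2 * s ^+ 2) - 2 * l3 * (c ^+ 2 * s ^+ 2) by ring.
have e3 : s ^+ 2 * (l3 * s ^+ 2) = l3 * (s ^+ 2 * s ^+ 2) by ring.
have : s ^+ 2 * (2 * c ^+ 2 * (l2 - l3)) <= s ^+ 2 * (l3 * s ^+ 2).
  rewrite e2 e3; rewrite e0 e1 in hX; clear -hX i8; lra.
rewrite ler_pM2l //; clear -key; lra.
Qed.

Lemma cs_choice (R : realType) (l2 l3 : R) : 0 < l3 -> l3 < l2 -> l2 + l3 <= 1 ->
  exists c s : R, c ^+ 2 + s ^+ 2 = 1 /\ 0 < s /\ l3 * s ^+ 2 < 2 * c ^+ 2 * (l2 - l3).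
Proof.
move=> l3p l32 hl.
set t := (l2 - l3) / 4.
have tp : 0 < t by rewrite /t; clear -l32; lra.
have t1 : t <= 1 / 4 by rewrite /t; clear -hl l3p; lra.
have l31 : l3 <= 1 by clear -hl l32 l3p; lra.
set u := 1 + t ^+ 2.
have up : 0 < u by rewrite /u ltr_wpDr // sqr_ge0.
have un : u != 0 by rewrite gt_eqF.
exists ((1 - t ^+ 2) / u), (2 * t / u).
split; first by rewrite /u; field; rewrite -/u.
split; first by rewrite divr_gt0 // mulr_gt0.
have e1 : l3 * (2 * t / u) ^+ 2 = (4 * l3 * t ^+ 2) / u ^+ 2 by field.
have e2 : 2 * ((1 - t ^+ 2) / u) ^+ 2 * (l2 - l3) = (8 * t * (1 - t ^+ 2) ^+ 2) / u ^+ 2.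
  by rewrite /t; field.
rewrite e1 e2 ltr_pM2r ?invr_gt0 ?exprn_gt0 //.
have tt : t ^+ 2 <= 1 / 16.
  by rewrite expr2; clear -tp t1; nra.
have h2 : 9 / 16 <= (1 - t ^+ 2) ^+ 2.
  by clear -tt tp; nra.
have h3 : 4 * l3 * t ^+ 2 <= t.
  by rewrite expr2; clear -t1 tp l31 l3p; nra.
have h4 : 9 / 16 * t <= t * (1 - t ^+ 2) ^+ 2.
  by rewrite mulrC ler_pM2l.
clear -h3 h4 tp; lra.
Qed.

Section P.
Local Open Scope complex_scope.
Variable R : realType.
Local Notation C := R[i].
Local Notation cRe := complex.Re.
Local Notation cIm := complex.Im.
Local Notation bv1 := (bv1 R).
Local Notation bv2 := (bv2 R).
Local Notation bv3 := (bv3 R).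
Local Notation bv4 := (bv4 R).

Lemma sep_prod (p q : 'cV[C]_2) : unit_vec p -> unit_vec q -> separable (ketbra p *t ketbra q).
Proof.
move=> up uq; exists 1%N, (fun _ => 1), (fun _ => ketbra p *t ketbra q).
split=> //; split; first by rewrite big_ord1.
split; first by move=> _; exists p, q.
by rewrite big_ord1 scale1r.
Qed.

Lemma unit10 : unit_vec (col2 (1 : C) 0).
Proof. by apply: unit_col2; rewrite !cE; ring. Qed.
Lemma unit01 : unit_vec (col2 (0 : C) 1).
Proof. by apply: unit_col2; rewrite !cE; ring. Qed.

Lemma sepE00 : separable (ketbra (v4 (1 : C) 0 0 0)).
Proof.
have -> : ketbra (v4 (1 : C) 0 0 0) = ketbra (col2 1 0) *t ketbra (col2 1 0).
  by rewrite prod_expand !col2E0 !col2E1 ?mulr1 ?mulr0 ?mul0r.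
exact: sep_prod unit10 unit10.
Qed.
Lemma sepE11 : separable (ketbra (v4 (0 : C) 0 0 1)).
Proof.
have -> : ketbra (v4 (0 : C) 0 0 1) = ketbra (col2 0 1) *t ketbra (col2 0 1).
  by rewrite prod_expand !col2E0 !col2E1 ?mulr1 ?mulr0 ?mul0r.
exact: sep_prod unit01 unit01.
Qed.
Lemma sepE01 : separable (ketbra (v4 (0 : C) 1 0 0)).
Proof.
have -> : ketbra (v4 (0 : C) 1 0 0) = ketbra (col2 1 0) *t ketbra (col2 0 1).
  by rewrite prod_expand !col2E0 !col2E1 ?mulr1 ?mulr0 ?mul0r.
exact: sep_prod unit10 unit01.
Qed.

Lemma v4_scaleE (x a b c d : C) (i : 'I_4) :
  v4 (x * a) (x * b) (x * c) (x * d) i 0 = x * v4 a b c d i 0.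
Proof. by rewrite !mxE; case: i => [[|[|[|[|?]]]] Hi]. Qed.

Lemma ketbra_v4_scale (x : R) (a b c d : C) :
  ketbra (v4 (x%:C * a) (x%:C * b) (x%:C * c) (x%:C * d)) = (x * x)%:C *: ketbra (v4 a b c d).
Proof.
apply/matrixP => i j; rewrite scalemE !ketbraE !v4_scaleE conjcM cjR rmorphM; ring.
Qed.

Lemma P12E : ketbra (v4 (1 : C) 0 0 1) + ketbra (v4 1 0 0 (-1)) =
  (2 : R)%:C *: (ketbra (v4 1 0 0 0) + ketbra (v4 0 0 0 1)).
Proof.
apply/matrixP => i j; rewrite scalemE !addmE !ketbraE !mxE.
case: i => [[|[|[|[|?]]]] Hi] //; case: j => [[|[|[|[|?]]]] Hj] //; cbn [nth nat_of_ord];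
  rewrite ?(cj0, cj1, cjN1); rewrite -?(rmorph_nat (real_complex R)); ring.
Qed.
End P.

Section P.
Local Open Scope complex_scope.
Variable R : realType.
Local Notation C := R[i].
Local Notation cRe := complex.Re.
Local Notation cIm := complex.Im.
Local Notation bv1 := (bv1 R).
Local Notation bv2 := (bv2 R).
Local Notation bv3 := (bv3 R).
Local Notation bv4 := (bv4 R).

Lemma sc1 (x : R) : v4 x%:C 0 0 x%:C = v4 (x%:C * 1) (x%:C * 0) (x%:C * 0) (x%:C * 1).
Proof. by rewrite mulr1 mulr0. Qed.
Lemma sc2 (x : R) : v4 0 x%:C 0 0 = v4 (x%:C * 0) (x%:C * 1) (x%:C * 0) (x%:C * 0).
Proof. by rewrite mulr1 mulr0. Qed.
Lemma sc3 (x : R) : v4 0 0 x%:C 0 = v4 (x%:C * 0) (x%:C * 0) (x%:C * 1) (x%:C * 0).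
Proof. by rewrite mulr1 mulr0. Qed.
Lemma sc4 (x y : R) : y = - x -> v4 x%:C 0 0 y%:C = v4 (x%:C * 1) (x%:C * 0) (x%:C * 0) (x%:C * -1).
Proof. by move=> ->; rewrite mulr1 mulr0 mulrN1 rmorphN. Qed.

Lemma no_map (l1 l2 l3 : R) (L : 'M[C]_4 -> 'M[C]_4) :
  l2 <= l1 -> l3 <= l2 -> 0 < l3 -> l1 + l2 + l3 = 1 -> 1 < 2 * l1 - l2 -> l3 < l2 ->
  non_entangling L -> L (rho_l l1 l2 l3) = sigma_l l1 l2 l3 -> False.
Proof.
move=> h21 h32 l3p hs h1 h23 [[Llin [Lcp Ltp]] Lsep] Lrho.
have L0 : L 0 = 0.
  have H := Llin 1 0 0; rewrite !scale1r !addr0 in H.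
  by apply: (addrI (L 0)); rewrite addr0 -H.
have LD A B : L (A + B) = L A + L B.
  by rewrite -{1}[A]scale1r Llin scale1r.
have LZ a A : L (a *: A) = a *: L A.
  by rewrite -[a *: A]addr0 Llin L0 addr0.
have pos u w : 0 <= cRe (qf u (L (ketbra w))).
  exact: qf_psd (cp_psd Lcp (psd_ketbra w)).
have tq X : cRe (qf bv1 (L X)) + cRe (qf bv2 (L X)) + cRe (qf bv3 (L X)) + cRe (qf bv4 (L X))
    = cRe (qf bv1 X) + cRe (qf bv2 X) + cRe (qf bv3 X) + cRe (qf bv4 X).
  by rewrite -!cReD -!trace_qf Ltp.
rewrite /rho_l /sigma_l Bell1E Bell2E Bell3E ket01E in Lrho.
set P1 := ketbra (v4 (1 : C) 0 0 1) in Lrho.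
set P2 := ketbra (v4 (1 : C) 0 0 (-1)) in Lrho.
set P3 := ketbra (v4 (0 : C) 1 1 0) in Lrho.
set E01 := ketbra (v4 (0 : C) 1 0 0) in Lrho.
have eP1 : P1 = ketbra (v4 (1 : C) 0 0 1) by [].
have eP2 : P2 = ketbra (v4 (1 : C) 0 0 (-1)) by [].
have eP3 : P3 = ketbra (v4 (0 : C) 1 1 0) by [].
have eE01 : E01 = ketbra (v4 (0 : C) 1 0 0) by [].
clearbody P1 P2 P3 E01.
set E10 := ketbra (v4 (0 : C) 0 1 0).
set E00 := ketbra (v4 (1 : C) 0 0 0).
set E11 := ketbra (v4 (0 : C) 0 0 1).
have eE10 : E10 = ketbra (v4 (0 : C) 0 1 0) by [].
have eE00 : E00 = ketbra (v4 (1 : C) 0 0 0) by [].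
have eE11 : E11 = ketbra (v4 (0 : C) 0 0 1) by [].
have sE00 : separable E00 by rewrite eE00; exact: sepE00.
have sE11 : separable E11 by rewrite eE11; exact: sepE11.
have sE01 : separable E01 by rewrite eE01; exact: sepE01.
have P12 : P1 + P2 = (2 : R)%:C *: (E00 + E11) by rewrite eP1 eP2 eE00 eE11 P12E.
set h := Num.sqrt (2^-1 : R).
have hh : h * h = 2^-1 by rewrite -expr2 sqr_sqrtr // invr_ge0.
have sY : separable ((h * h * (h * h))%:C *: P1 + (h * h * (h * h))%:C *: E01 + (h * h * (h * h))%:C *: E10).
  have -> : (h * h * (h * h))%:C *: P1 + (h * h * (h * h))%:C *: E01 + (h * h * (h * h))%:C *: E10
     = TWM h h h h.
    by rewrite /TWM sc1 sc2 sc3 !ketbra_v4_scale eP1 eE01 eE10.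
  by apply: TW_sep; rewrite -expr2 in hh; rewrite hh; field.
have hl : l2 + l3 <= 1 by clear -hs h21 h32 l3p; lra.
have [c [s' [cs [sp key]]]] := cs_choice l3p h23 hl.
have sX : separable (((c * s') * (c * s'))%:C *: P2 + ((c * - c) * (c * - c))%:C *: E01
                     + ((s' * s') * (s' * s'))%:C *: E10).
  have -> : ((c * s') * (c * s'))%:C *: P2 + ((c * - c) * (c * - c))%:C *: E01
                     + ((s' * s') * (s' * s'))%:C *: E10 = TWM c s' s' (- c).
    rewrite /TWM (sc4 (_ : s' * - c = - (c * s'))); last by ring.
    by rewrite sc2 sc3 !ketbra_v4_scale eP2 eE01 eE10.
  by apply: TW_sep => //; rewrite sqrrN addrC.
clearbody E10 E00 E11 h.
have Eq u := congr1 (fun M => cRe (qf u M)) Lrho.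
have E1 := Eq bv1; have E2 := Eq bv2; have E4 := Eq bv4.
move: E1 E2 E4 => /=; rewrite !LD !LZ !qfD !qfZ !cReD !cReRM => E1 E2 E4.
have sb1 := fun M (H : separable M) => sep_bound (@prod_bound1 R) (Lsep M H).
have sb2 := fun M (H : separable M) => sep_bound (@prod_bound2 R) (Lsep M H).
have sb3 := fun M (H : separable M) => sep_bound (@prod_bound3 R) (Lsep M H).
have Y := sb1 _ sY; have X := sb2 _ sX.
move: Y X; rewrite !LD !LZ !qfD !qfZ !cReD !cReRM => Y X.
have S1 := sb1 _ sE00; have S2 := sb1 _ sE11.
have S12 : cRe (qf bv1 (L P1)) + cRe (qf bv1 (L P2)) <= 4.
  have := congr1 (fun M => cRe (qf bv1 (L M))) P12 => /=.
  rewrite !(LD, LZ) !(qfD, qfZ) !(cReD, cReRM) => ->.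
  by clear -S1 S2; lra.
have T2b := sb2 _ sE01; have T3b := sb3 _ sE01.
have tP1 := tq P1; have tE01 := tq E01.
rewrite eP1 val_11 val_21 val_31 val_41 -eP1 in tP1.
rewrite eE01 val_1e val_2e val_3e val_4e -eE01 in tE01.
rewrite eP1 eP2 eP3 val_11 val_12 val_13 val_21 val_22 val_23 val_41 val_42 val_43 -eP1 -eP2 in E1 E2 E4.
have pos1 : forall u, 0 <= cRe (qf u (L P1)) by move=> u; rewrite eP1.
have pos2 : forall u, 0 <= cRe (qf u (L P2)) by move=> u; rewrite eP2.
have pos3 : forall u, 0 <= cRe (qf u (L E01)) by move=> u; rewrite eE01.
have pos4 : forall u, 0 <= cRe (qf u (L E10)) by move=> u; rewrite eE10.
rewrite hh in Y.
apply: (core l3p h23 h21 hs h1 _ _ _ (pos1 bv2) (pos1 bv3) (pos1 bv4) (pos2 bv4)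
         (pos3 bv1) (pos3 bv4) (pos4 bv1) (pos4 bv2) _ _ _ S12 T2b T3b X cs sp key).
- by clear -E1; lra.
- by clear -E2; lra.
- by clear -E4; lra.
- by clear -tP1; lra.
- by clear -tE01; lra.
- by clear -Y; lra.
Qed.
End P.

Unset Implicit Arguments.

Theorem theorem5 (R : realType) (l1 l2 l3 : R) :
  l2 <= l1 -> l3 <= l2 -> 0 < l3 -> l1 + l2 + l3 = 1 ->
  1 < 2 * l1 - l2 -> l3 < l2 ->
  ~ (exists L : 'M[R[i]]_4 -> 'M[R[i]]_4,
       non_entangling L /\ L (rho_l l1 l2 l3) = sigma_l l1 l2 l3).
Proof.
move=> h21 h32 l3p hs h1 h23 [L [HL Hr]].
exact: (no_map h21 h32 l3p hs h1 h23 HL Hr).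
Qed.
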